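(* Let $U\subseteq L_{\mathrm{up}}$ be a set of up-links such that the sets $P_u$, $u\in U$, are pairwise disjoint, and let $(C,A)$ be a (weakly) connected component of the dependency graph of $U$ (which is an arborescence). Let $\ell\in C$ and let $H_\ell$ be the arc set of the directed path in $(C,A)$ from the root of $(C,A)$ to $\ell$. Then $$\bigl|\{\bar\ell\in C\setminus\{\ell\}\colon \mathrm{apex}(\ell)\in V_{\bar\ell}\}\bigr|\ \le\ \bigl|\{u\in U\colon H_\ell\cap A_u\neq\emptyset\}\bigr|.$$
   Context: Let $(G=(V,E),L,w)$ be a WTAP instance (spanning tree $G$, links $L\subseteq\binom V2$, weights $w>0$) with a fixed root $r\in V$, and let $F\subseteq L$ be a WTAP solution, i.e. $\bigcup_{\ell\in F}P_\ell=E$, where $P_\ell$ is the edge set of the tree path between the endpoints of $\ell$ and $V_\ell$ its vertex set. Ancestors of $v$ are the vertices on the $r$-$v$ path in $G$ (including $r$ and $v$); descendants are defined reciprocally. $\mathrm{apex}(\ell)$ is the vertex of $V_\ell$ closest to $r$. An up-link is a link $\{t,b\}$ with $t$ an ancestor of $b$; $L_{\mathrm{up}}$ is the set of up-links. For $v\in V$ let $B_v=\{\ell\in F\colon\mathrm{apex}(\ell)\text{ is a descendant of }v\}$. For an up-link $u=\{t,b\}$ with $t$ an ancestor of $b$, let $v_u$ be the ancestor of $t$ farthest from $r$ such that $P_u\subseteq\bigcup_{\ell\in B_{v_u}}P_\ell$, and fix $F_u\subseteq B_{v_u}$ inclusion-wise minimal with $P_u\subseteq\bigcup_{\ell\in F_u}P_\ell$.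 For $\ell\in F_u$ let $P_{u,\ell}=P_u\setminus\bigcup_{\bar\ell\in F_u\setminus\{\ell\}}P_{\bar\ell}$; these sets are nonempty, pairwise disjoint, and each is the edge set of a path. Define $\ell_1\prec_u\ell_2$ iff the edges of $P_{u,\ell_1}$ appear before those of $P_{u,\ell_2}$ on the $t$-$b$ path in $G$. If $\ell_1\prec_u\cdots\prec_u\ell_q$ are the links of $F_u$, let $A_u=\{(\ell_i,\ell_{i+1})\colon i=1,\dots,q-1\}$. The dependency graph of $U\subseteq L_{\mathrm{up}}$ is the directed graph with vertex set $F$ whose arc set is the disjoint union of the $A_u$, $u\in U$. When the $P_u$, $u\in U$, are pairwise disjoint, this graph is a branching (no directed cycles, in-degrees at most one), so each weakly connected component is an arborescence. *)

(* Defs.v *)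
From mathcomp Require Import all_boot all_order all_algebra.
Set Implicit Arguments. Unset Strict Implicit. Unset Printing Implicit Defensive.

(* The tree edge {c, par c} (c <> r) is identified with
   its child endpoint c, so the edge set E is [set c | c != r].  Links are
   2-element vertex sets. *)

Definition is_rooted_tree (V : finType) (r : V) (par : V -> V) : Prop :=
  par r = r /\ forall v, exists k, iter k par v = r.

Definition anc (V : finType) (par : V -> V) (x v : V) : bool :=
  [exists k : 'I_#|V|.+1, iter k par v == x].

(* number of ancestors = distance to r plus one *)
Definition depth (V : finType) (par : V -> V) (v : V) : nat :=
  #|[set y | anc par y v]|.

Definition tree_edges (V : finType) (r : V) : {set V} := [set c | c != r].

(* P_l : edges of the tree path between the endpoints of l : tree edge c lies on
   it iff exactly one endpoint of l lies in the subtree of c *)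
Definition lpath (V : finType) (r : V) (par : V -> V) (l : {set V}) : {set V} :=
  [set c | (c != r) && odd #|[set x in l | anc par c x]|].

Definition lverts (V : finType) (r : V) (par : V -> V) (l : {set V}) : {set V} :=
  l :|: [set x | [exists c in lpath r par l, (x == c) || (x == par c)]].

Definition apex (V : finType) (r : V) (par : V -> V) (l : {set V}) : V :=
  odflt r [pick x in lverts r par l |
             [forall y in lverts r par l, depth par x <= depth par y]].

Definition is_uplink (V : finType) (par : V -> V) (u : {set V}) : bool :=
  (#|u| == 2) && [exists t in u, [forall x in u, anc par t x]].

Definition utop (V : finType) (r : V) (par : V -> V) (u : {set V}) : V :=
  odflt r [pick t in u | [forall x in u, anc par t x]].

Definition Bv (V : finType) (r : V) (par : V -> V) (F : {set {set V}}) (v : V)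
  : {set {set V}} := [set l in F | anc par v (apex r par l)].

Definition covered_by (V : finType) (r : V) (par : V -> V)
  (S : {set {set V}}) (X : {set V}) : bool :=
  X \subset \bigcup_(l in S) lpath r par l.

Definition vu (V : finType) (r : V) (par : V -> V) (F : {set {set V}})
  (u : {set V}) : V :=
  odflt r [pick x | [&& anc par x (utop r par u),
                        covered_by r par (Bv r par F x) (lpath r par u) &
                        [forall y, (anc par y (utop r par u) &&
                                    covered_by r par (Bv r par F y) (lpath r par u))
                                   ==> (depth par y <= depth par x)]]].

(* S is an admissible choice of F_u: inclusion-wise minimal subset of B_{v_u}
   covering P_u *)
Definition minimal_cover (V : finType) (r : V) (par : V -> V)
  (F : {set {set V}}) (u : {set V}) (S : {set {set V}}) : Prop :=
  [/\ S \subset Bv r par F (vu r par F u),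
      covered_by r par S (lpath r par u) &
      forall S' : {set {set V}}, S' \proper S -> ~~ covered_by r par S' (lpath r par u)].

Definition Pul (V : finType) (r : V) (par : V -> V)
  (Fu : {set V} -> {set {set V}}) (u l : {set V}) : {set V} :=
  lpath r par u :\: \bigcup_(l' in Fu u :\ l) lpath r par l'.

Definition precu (V : finType) (r : V) (par : V -> V)
  (Fu : {set V} -> {set {set V}}) (u l1 l2 : {set V}) : bool :=
  [forall c1 in Pul r par Fu u l1, forall c2 in Pul r par Fu u l2,
     (c1 != c2) && anc par c1 c2].

Definition Au (V : finType) (r : V) (par : V -> V)
  (Fu : {set V} -> {set {set V}}) (u : {set V}) : {set {set V} * {set V}} :=
  [set a | [&& a.1 \in Fu u, a.2 \in Fu u, precu r par Fu u a.1 a.2 &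
              [forall l in Fu u, ~~ (precu r par Fu u a.1 l && precu r par Fu u l a.2)]]].

Definition darcs (V : finType) (r : V) (par : V -> V)
  (Fu : {set V} -> {set {set V}}) (U : {set {set V}}) : {set {set V} * {set V}} :=
  [set a | [exists u in U, a \in Au r par Fu u]].

Definition wrel (V : finType) (r : V) (par : V -> V)
  (Fu : {set V} -> {set {set V}}) (U : {set {set V}}) : rel {set V} :=
  fun x y => ((x, y) \in darcs r par Fu U) || ((y, x) \in darcs r par Fu U).

(* weakly connected component of x (x should be a vertex, i.e. x \in F) *)
Definition wcomp (V : finType) (r : V) (par : V -> V)
  (Fu : {set V} -> {set {set V}}) (U : {set {set V}}) (x : {set V}) : {set {set V}} :=
  [set y | connect (wrel r par Fu U) x y].

(* Main.v *)
Require Import Defs.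
From mathcomp Require Import all_boot all_order all_algebra.
From mathcomp Require Import zify.
Set Implicit Arguments. Unset Strict Implicit. Unset Printing Implicit Defensive.

Lemma connect_last (T : finType) (e : rel T) c z : connect e c z -> z != c ->
  exists2 p, connect e c p & e p z.
Proof.
case/connectP => q; case/lastP: q => [|q w] /=; first by move=> _ ->; rewrite eqxx.
rewrite rcons_path last_rcons => /andP [pq ew] -> _.
by exists (last c q) => //; apply/connectP; exists q.
Qed.


Lemma walk_zip (T : eqType) (e : rel T) (x : T) (p : seq T) (a b : T) :
  path e x p -> (a, b) \in zip (x :: p) p -> e a b.
Proof.
elim: p x => [|y p IH] x //= /andP [exy pp].
rewrite in_cons => /orP [/eqP [-> ->] //|H].
exact: IH pp H.
Qed.

Lemma zip_mem (T : eqType) (x : T) (p : seq T) (a b : T) : (a, b) \in zip (x :: p) p -> a \in x :: p /\ b \in p.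
Proof.
elim: p x => [|y p IH] x //=.
rewrite in_cons => /orP [/eqP [-> ->]|H]; first by rewrite eqxx mem_head.
by have [H1 H2] := IH y H; rewrite H1 orbT in_cons H2 orbT.
Qed.

Lemma walk_next (T : eqType) (x : T) (p : seq T) (z : T) : z \in x :: p -> z != last x p ->
  exists y, (z, y) \in zip (x :: p) p.
Proof.
elim: p x => [|y p IH] x /=; first by rewrite inE => /eqP ->; rewrite eqxx.
rewrite in_cons => /orP [/eqP ->|H] Hl; first by exists y; rewrite mem_head.
by have [w Hw] := IH y H Hl; exists w; rewrite in_cons Hw orbT.
Qed.

Lemma walk_prev (T : eqType) (x : T) (p : seq T) (z : T) : z \in p -> exists w, (w, z) \in zip (x :: p) p.
Proof.
elim: p x => [|y p IH] x //=.
rewrite in_cons => /orP [/eqP ->|H]; first by exists x; rewrite mem_head.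
by have [w Hw] := IH y H; exists w; rewrite in_cons Hw orbT.
Qed.

Lemma walk_conn (T : finType) (e : rel T) (x : T) (p : seq T) (z : T) : path e x p -> z \in x :: p ->
  connect e z (last x p).
Proof.
elim: p x z => [|y p IH] x z /=; first by move=> _; rewrite inE => /eqP ->; apply: connect0.
move=> /andP [exy pp]; rewrite in_cons => /orP [/eqP ->|H].
  have H2 := IH y y pp (mem_head y p).
  exact: (connect_trans (connect1 exy) H2).
exact: IH.
Qed.

Section Tree.
Variables (V : finType) (r : V) (par : V -> V).
Hypothesis Htree : is_rooted_tree r par.

Lemma iter_bound v k : exists2 k', k' <= #|V| & iter k' par v = iter k par v.
Proof.
have [i [j ij Hij]] : exists i, exists2 j : 'I_#|V|.+1, i != j & iter i par v = iter j par v.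
  apply/injectivePn; apply/negP => /injectiveP inj.
  by have := leq_card _ inj; rewrite card_ord ltnn.
wlog lt_ij : i j ij Hij / i < j.
  move=> W; case: (ltngtP i j) => H; first exact: (W i j).
  - by apply: (W j i); rewrite // eq_sym.
  - by move: ij; rewrite -(inj_eq val_inj) /= H eqxx.
have jb : (j <= #|V|)%N by rewrite -ltnS.
elim: k {-2}k (leqnn k) => [|n IH] k kn.
  by exists 0; rewrite // (_ : k = 0) //; apply/eqP; rewrite -leqn0.
have [kb|kb] := leqP k #|V|; first by exists k.
have kj : (j <= k)%N by apply: leq_trans (ltnW kb).
have -> : iter k par v = iter (k - (j - i)) par v.
  have E1 : k - (j - i) = (k - j) + i by lia.
  have E2 : k = (k - j) + j by lia.
  by rewrite E1 {1}E2 !iterD Hij.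
apply: IH; lia.
Qed.

Local Notation anc := (anc par).

Lemma ancP x v : reflect (exists k, iter k par v = x) (anc x v).
Proof.
apply: (iffP existsP) => [[k /eqP <-]|[k <-]]; first by exists k.
have [k' kb <-] := iter_bound v k.
by exists (Ordinal (kb : k' < #|V|.+1)).
Qed.

Lemma anc_refl x : anc x x.
Proof. by apply/ancP; exists 0. Qed.

Lemma anc_trans x y z : anc x y -> anc y z -> anc x z.
Proof.
move=> /ancP [a <-] /ancP [b <-]; apply/ancP; exists (a + b).
by rewrite iterD.
Qed.

Lemma iter_r k : iter k par r = r.
Proof. by elim: k => //= k ->; case: Htree. Qed.

Lemma anc_r v : anc r v.
Proof. by case: Htree => _ /(_ v) [k Hk]; apply/ancP; exists k. Qed.

Lemma anc_to_r x : anc x r -> x = r.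
Proof. by move=> /ancP [k <-]; rewrite iter_r. Qed.

Lemma iter_cycle v n : 0 < n -> iter n par v = v -> v = r.
Proof.
move=> n0 Hn; case: Htree => _ /(_ v) [m Hm].
have Hc : forall c, iter (c * n) par v = v.
  by elim=> [|c IH] //=; rewrite mulSn iterD IH Hn.
have mb : (m <= m * n)%N by rewrite leq_pmulr.
by rewrite -(Hc m) -(subnK mb) iterD Hm iter_r.
Qed.

Lemma anc_antisym x y : anc x y -> anc y x -> x = y.
Proof.
move=> /ancP [a Ha] /ancP [b Hb].
case: a Ha => [|a] Ha; first by rewrite -Ha.
have yr : y = r.
  by apply: (@iter_cycle y (b + a.+1)); [rewrite addnS | rewrite iterD Ha Hb].
by rewrite -Ha yr iter_r.
Qed.

Lemma anc_total x y v : anc x v -> anc y v -> anc x y || anc y x.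
Proof.
move=> /ancP [a <-] /ancP [b <-].
have [ab|ba] := leqP a b.
  by apply/orP; right; apply/ancP; exists (b - a); rewrite -iterD subnK.
by apply/orP; left; apply/ancP; exists (a - b); rewrite -iterD subnK // ltnW.
Qed.

Lemma anc_par x v : anc x (par v) -> anc x v.
Proof. by move=> /ancP [k <-]; apply/ancP; exists k.+1; rewrite iterSr. Qed.

Lemma anc_parE x v : anc x v -> x != v -> anc x (par v).
Proof.
move=> /ancP [[|k] <-]; first by rewrite eqxx.
by move=> _; apply/ancP; exists k; rewrite iterSr.
Qed.

Lemma par_fix v : par v = v -> v = r.
Proof. by move=> H; apply: (@iter_cycle v 1). Qed.

Lemma anc_par_self v : anc v (par v) -> v = r.
Proof.
move=> H; have E := anc_antisym H (anc_par (anc_refl (par v))).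
by apply: par_fix; rewrite -E.
Qed.

Lemma child_exists w x : anc w x -> w != x ->
  exists c, [/\ par c = w, anc c x & c != r].
Proof.
move=> /ancP ex wx.
have ex' : exists k, iter k par x == w by case: ex => k <-; exists k.
case: (ex_minnP ex') => m /eqP Hm Hmin.
case: m Hm Hmin => [|m] Hm Hmin; first by move: wx; rewrite -Hm eqxx.
exists (iter m par x); split.
- by rewrite -iterS.
- by apply/ancP; exists m.
- apply/eqP => E; have Hp : par (iter m par x) = w by rewrite -iterS.
  have Ew : iter m par x = w by rewrite -Hp E; case: Htree.
  by have := Hmin m; rewrite Ew eqxx ltnn => /(_ isT).
Qed.

Definition sanc x y := (x != y) && anc x y.

Lemma sancW x y : sanc x y -> anc x y. Proof. by case/andP. Qed.

Lemma sanc_par x v : v != r -> anc x (par v) -> sanc x v.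
Proof.
move=> vr H; rewrite /sanc anc_par // andbT; apply/eqP => E; subst x.
by move: vr; rewrite (anc_par_self H) eqxx.
Qed.

Lemma sanc_neq x y : sanc x y -> x != y. Proof. by case/andP. Qed.

Lemma sanc_not x y : sanc x y -> ~~ anc y x.
Proof.
case/andP => xy H; apply/negP => H'.
by move: xy; rewrite (anc_antisym H H') eqxx.
Qed.

Lemma sanc_anc_trans x y z : sanc x y -> anc y z -> sanc x z.
Proof.
case/andP => xy H1 H2; rewrite /sanc (anc_trans H1 H2) andbT.
apply/eqP => E; subst z; move: xy; by rewrite (anc_antisym H1 H2) eqxx.
Qed.

Lemma anc_sanc_trans x y z : anc x y -> sanc y z -> sanc x z.
Proof.
move=> H1 /andP [yz H2]; rewrite /sanc (anc_trans H1 H2) andbT.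
apply/eqP => E; subst z; move: yz; by rewrite (anc_antisym H2 H1) eqxx.
Qed.

Lemma anc_cases x y v : anc x v -> anc y v -> [\/ x = y, sanc x y | sanc y x].
Proof.
move=> H1 H2; have [->|xy] := eqVneq x y; first by constructor 1.
case/orP: (anc_total H1 H2) => H.
  by constructor 2; rewrite /sanc xy.
by constructor 3; rewrite /sanc eq_sym xy.
Qed.

Lemma sanc_r_neq x y : sanc x y -> y != r.
Proof.
move=> H; apply/eqP => E; subst y.
by move: (sanc_neq H); rewrite (anc_to_r (sancW H)) eqxx.
Qed.

Lemma sanc_parE x y : sanc x y -> anc x (par y).
Proof. by case/andP => xy H; apply: anc_parE => //; rewrite eq_sym. Qed.

Lemma depth_anc x y : anc x y -> depth par x <= depth par y.
Proof.
move=> H; apply: subset_leq_card; apply/subsetP => z; rewrite !inE => Hz.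
exact: anc_trans Hz H.
Qed.

Lemma depth_sanc x y : sanc x y -> depth par x < depth par y.
Proof.
move=> H; apply: proper_card; apply/properP; split.
  by apply/subsetP => z; rewrite !inE => Hz; apply: anc_trans Hz (sancW H).
by exists y; rewrite !inE ?anc_refl // ; apply: sanc_not.
Qed.

Lemma card_pair_pred (P : pred V) x y : x != y ->
  #|[set z in [set x; y] | P z]| = P x + P y.
Proof.
move=> xy.
have E : [set z in [set x; y] | P z] =
  (if P x then [set x] else set0) :|: (if P y then [set y] else set0).
  apply/setP => z; rewrite !inE.
  have [->|zx] := eqVneq z x.
    by case: (P x); case: (P y); rewrite /= ?inE ?eqxx ?(negbTE xy) ?orbT.
  have [->|zy] := eqVneq z y.
    by case: (P x); case: (P y); rewrite /= ?inE ?eqxx ?orbT ?(eq_sym y x) ?(negbTE xy).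
  by case: (P x); case: (P y); rewrite /= ?inE ?(negbTE zx) ?(negbTE zy).
rewrite E; case Px: (P x); case Py: (P y); rewrite ?set0U ?setU0 ?cards0 ?cards1 //.
by rewrite cards2 xy.
Qed.

Lemma lpath_pair x y c : x != y ->
  (c \in lpath r par [set x; y]) = (c != r) && (anc c x (+) anc c y).
Proof.
move=> xy; rewrite /lpath inE; congr (_ && _).
by rewrite (card_pair_pred (fun z => anc c z)) // oddD !oddb.
Qed.

Lemma lvertsE l z : (z \in lverts r par l) =
  (z \in l) || [exists c in lpath r par l, (z == c) || (z == par c)].
Proof. by rewrite /lverts !inE. Qed.

Lemma lpath_V l c : c \in lpath r par l ->
  (c \in lverts r par l) /\ (par c \in lverts r par l).
Proof.
move=> H; rewrite !lvertsE; split; apply/orP; right; apply/existsP; exists c;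
  by rewrite H eqxx ?orbT.
Qed.

Lemma lpath_nr l c : c \in lpath r par l -> c != r.
Proof. by rewrite /lpath inE => /andP []. Qed.

Definition lca x y := [arg max_(w > r | anc w x && anc w y) depth par w].

Lemma lcaP x y : [/\ anc (lca x y) x, anc (lca x y) y &
  forall z, anc z x -> anc z y -> anc z (lca x y)].
Proof.
rewrite /lca; case: arg_maxnP; first by rewrite !anc_r.
move=> w /andP [wx wy] Hmax; split => // z zx zy.
case: (anc_cases zx wx) => [->|/sancW //|H]; first exact: anc_refl.
by have := Hmax z; rewrite zx zy => /(_ isT) /=; rewrite leqNgt (depth_sanc H).
Qed.

Lemma V_helper x y w c : anc w x -> anc w y -> anc c x -> ~~ anc c y ->
  anc w c /\ anc w (par c).
Proof.
move=> wx wy cx cy.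
have wc : anc w c.
  case: (anc_cases wx cx) => [->|/sancW //|H]; first exact: anc_refl.
  by move: cy; rewrite (anc_trans (sancW H) wy).
split=> //; apply: anc_parE => //; apply/eqP => E; subst w.
by move: cy; rewrite wy.
Qed.

Lemma V_pair x y w z : x != y -> anc w x -> anc w y ->
  z \in lverts r par [set x; y] -> anc w z /\ (anc z x || anc z y).
Proof.
move=> xy wx wy.
rewrite lvertsE !inE => /orP [/orP [] /eqP ->|]; first by rewrite wx anc_refl.
  by rewrite wy anc_refl orbT.
case/existsP => c /andP [].
rewrite lpath_pair // => /andP [cr Hc] Hz.
case cx: (anc c x); move: Hc; rewrite cx /=.
  move=> /negbTE cy; have [H1 H2] := V_helper wx wy cx (negbT cy).
  case/orP: Hz => /eqP ->; split => //; first by rewrite cx.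
  by rewrite (anc_trans (anc_par (anc_refl (par c))) cx).
move=> cy; have [H1 H2] := V_helper wy wx cy (negbT cx).
case/orP: Hz => /eqP ->; split => //; first by rewrite cy orbT.
by rewrite (anc_trans (anc_par (anc_refl (par c))) cy) orbT.
Qed.

Lemma lca_in_V x y : x != y -> lca x y \in lverts r par [set x; y].
Proof.
move=> xy; have [wx wy wm] := lcaP x y.
rewrite lvertsE !inE.
have [E|wnx] := eqVneq (lca x y) x; first by [].
have [E|wny] := eqVneq (lca x y) y; first by rewrite orbT.
apply/orP; right; have [c [pc cx cr]] := child_exists wx wnx.
apply/existsP; exists c; rewrite pc eqxx orbT andbT lpath_pair // cr /= cx /=.
apply/negP => cy; have := wm c cx cy; rewrite -pc => /anc_par_self.
by move=> E; move: cr; rewrite E eqxx.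
Qed.

Lemma apex_pair x y : x != y -> apex r par [set x; y] = lca x y.
Proof.
move=> xy; have [wx wy wm] := lcaP x y.
rewrite /apex; case: pickP => [z /andP [zV /forallP Hz]|H] /=.
  have [Hwz _] := V_pair xy wx wy zV.
  have := Hz (lca x y); rewrite lca_in_V //= => Hd.
  case: (anc_cases Hwz (anc_refl z)) => [//|H|H].
    by move: Hd; rewrite leqNgt (depth_sanc H).
  by move: Hwz; rewrite (negbTE (sanc_not H)).
have := H (lca x y); rewrite lca_in_V //=; move/negP; case.
apply/forallP => z; apply/implyP => zV.
by have [Hwz _] := V_pair xy wx wy zV; apply: depth_anc.
Qed.

Lemma xorE (a b : bool) : a (+) b = (a && ~~ b) || (b && ~~ a).
Proof. by case: a; case: b. Qed.

Section Link.
Variable l : {set V}.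
Hypothesis l2 : #|l| = 2.

Local Notation P := (lpath r par l).
Local Notation VV := (lverts r par l).

Lemma apex_in : apex r par l \in VV.
Proof.
have /cards2P [x [y [xy ->]]] : #|l| == 2 by rewrite l2.
by rewrite apex_pair // lca_in_V.
Qed.

Lemma apex_anc z : z \in VV -> anc (apex r par l) z.
Proof.
have /cards2P [x [y [xy El]]] : #|l| == 2 by rewrite l2.
rewrite El apex_pair //; have [wx wy _] := lcaP x y.
by move=> /(V_pair xy wx wy) [].
Qed.

Lemma apex_sanc c : c \in P -> sanc (apex r par l) c.
Proof.
move=> cP; have [_ pc] := lpath_V cP; apply: sanc_par; first exact: lpath_nr cP.
exact: apex_anc.
Qed.

Lemma apex_notin : apex r par l \notin P.
Proof. by apply/negP => /apex_sanc; rewrite /sanc eqxx. Qed.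

Lemma cross q z z' : z \in VV -> z' \in VV -> anc q z -> ~~ anc q z' -> q \in P.
Proof.
have /cards2P [x [y [xy El]]] : #|l| == 2 by rewrite l2.
rewrite El; have [wx wy wm] := lcaP x y.
move=> /(V_pair xy wx wy) [_ Hz] /(V_pair xy wx wy) [wz' _] qz qz'.
rewrite lpath_pair // xorE.
have qr : q != r by apply/eqP => E; move: qz'; rewrite E anc_r.
have nqw : ~~ anc q (lca x y) by apply/negP => H; move: qz'; rewrite (anc_trans H wz').
rewrite qr /=; case/orP: Hz => Hz.
  have qx := anc_trans qz Hz; rewrite qx /=.
  by apply/orP; left; apply/negP => qy; move: nqw; rewrite wm.
have qy := anc_trans qz Hz; rewrite qy /=.
by apply/orP; right; apply/negP => qx; move: nqw; rewrite wm.
Qed.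

Lemma vcontig p g f : p \in VV -> sanc p g -> anc g f -> f \in P -> g \in P.
Proof.
have /cards2P [x [y [xy El]]] : #|l| == 2 by rewrite l2.
rewrite El; have [wx wy wm] := lcaP x y.
move=> /(V_pair xy wx wy) [wp _] pg gf.
rewrite !lpath_pair // !xorE (sanc_r_neq pg) => /andP [_ Hf] /=.
have ngw : anc g x -> anc g y -> False.
  by move=> gx gy; move: (sanc_not pg); rewrite (anc_trans (wm g gx gy) wp).
case/orP: Hf => /andP [fa fb].
  have gx := anc_trans gf fa; rewrite gx /=; apply/orP; left.
  by apply/negP => gy; apply: ngw.
have gy := anc_trans gf fa; rewrite gy /=; apply/orP; right.
by apply/negP => gx; apply: ngw.
Qed.

Lemma econtig g1 g2 g3 : g1 \in P -> g3 \in P -> anc g1 g2 -> anc g2 g3 -> g2 \in P.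
Proof.
have /cards2P [x [y [xy El]]] : #|l| == 2 by rewrite l2.
rewrite El !lpath_pair // !xorE => /andP [g1r H1] /andP [_ H3] a12 a23.
have g2r : g2 != r.
  by apply/eqP => E; move: a12 g1r; rewrite E => /anc_to_r ->; rewrite eqxx.
rewrite g2r /=.
case/orP: H3 => /andP [g3a g3b].
  have g2x := anc_trans a23 g3a; rewrite g2x /=; apply/orP; left.
  apply/negP => g2y; move: H1; rewrite (anc_trans a12 g2x) (anc_trans a12 g2y).
  by [].
have g2y := anc_trans a23 g3a; rewrite g2y /=; apply/orP; right.
apply/negP => g2x; move: H1; rewrite (anc_trans a12 g2x) (anc_trans a12 g2y).
by [].
Qed.

End Link.

Lemma uplinkP u : is_uplink par u ->
  exists b, [/\ anc (utop r par u) b, utop r par u != b & u = [set utop r par u; b]].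
Proof.
case/andP => /cards2P [x [y [xy ->]]] /existsP [t0 /andP [t0in /forallP Ht0]].
rewrite /utop; case: pickP => [t /andP [tin /forallP Ht]|H]; last first.
  by move: (H t0); rewrite t0in /=; move/negP; case; apply/forallP.
rewrite /=; move: tin; rewrite !inE => /orP [] /eqP Et; subst t.
  exists y; split => //.
  by move: (Ht y); rewrite !inE eqxx orbT.
move: (Ht x); rewrite !inE eqxx /= => Hyx.
by exists x; split; [| rewrite eq_sym | rewrite setUC].
Qed.


Lemma uline u : is_uplink par u -> exists b, forall c,
  (c \in lpath r par u) = sanc (utop r par u) c && anc c b.
Proof.
move=> Hu; have [b [tb ntb El]] := uplinkP Hu; exists b => c.
rewrite {1}El lpath_pair // xorE.
set t := utop r par u in tb ntb El *.
case ct: (anc c t); case cb: (anc c b); rewrite /= ?andbF ?andbT ?orbF ?andbF //.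
- apply/esym/negP => /sanc_not; by rewrite ct.
- by move: cb; rewrite (anc_trans ct tb).
- have tc : anc t c by move: (anc_total cb tb); rewrite ct.
  rewrite /sanc tc andbT.
  have -> : t != c by apply/eqP => E; move: ct; rewrite -E anc_refl.
  by apply/eqP => E; move: ct; rewrite E anc_r.
Qed.

Variables (F : {set {set V}}) (Fu : {set V} -> {set {set V}}) (U : {set {set V}}).
Hypothesis HF2 : forall e, e \in F -> #|e| = 2.
Hypothesis Hcov : \bigcup_(e in F) lpath r par e = tree_edges r.
Hypothesis HU : forall u, u \in U -> is_uplink par u.
Hypothesis Hmin : forall u, u \in U -> minimal_cover r par F u (Fu u).
Hypothesis Hdisj : forall u1 u2, u1 \in U -> u2 \in U -> u1 != u2 ->
  [disjoint lpath r par u1 & lpath r par u2].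

Local Notation LP := (lpath r par).
Local Notation LV := (lverts r par).
Local Notation apx := (apex r par).
Local Notation PU := (Pul r par Fu).
Local Notation prec := (precu r par Fu).
Local Notation AU := (Au r par Fu).

Lemma U2 u : u \in U -> #|u| = 2.
Proof. by move=> /HU /andP [/eqP]. Qed.

Lemma same_u u1 u2 c : u1 \in U -> u2 \in U -> c \in LP u1 -> c \in LP u2 -> u1 = u2.
Proof.
move=> H1 H2 c1 c2; apply/eqP; apply/negP => /negP ne.
by move: c2; rewrite (disjointFr (Hdisj H1 H2 ne) c1).
Qed.

Lemma Fu_sub u : u \in U -> Fu u \subset F.
Proof.
move=> /Hmin [H _ _]; apply: subset_trans H _.
by apply/subsetP => x; rewrite inE => /andP [].
Qed.

Lemma Fu2 u x : u \in U -> x \in Fu u -> #|x| = 2.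
Proof. by move=> uU xF; apply: HF2; apply: (subsetP (Fu_sub uU)). Qed.

Lemma Fu_cov u e : u \in U -> e \in LP u -> exists2 w, w \in Fu u & e \in LP w.
Proof.
move=> /Hmin [_ H _] eP; have := subsetP H e eP.
by case/bigcupP => w wF ew; exists w.
Qed.

Lemma Pul_ne u x : u \in U -> x \in Fu u -> exists e, e \in PU u x.
Proof.
move=> uU xF; have [_ _ Hm] := Hmin uU.
have pr : Fu u :\ x \proper Fu u.
  by apply/properP; split; [apply: subsetDl | exists x; rewrite ?inE ?eqxx].
have := Hm _ pr; case/subsetPn => e eP eN.
by exists e; rewrite /Pul inE eN eP.
Qed.

Lemma PulE u x e : e \in PU u x =
  (e \in LP u) && (e \notin \bigcup_(l' in Fu u :\ x) LP l').
Proof. by rewrite /Pul inE andbC. Qed.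

Lemma Pul_excl u x w e : e \in PU u x -> w \in Fu u -> e \in LP w -> w = x.
Proof.
rewrite PulE => /andP [_ eN] wF ew; apply/eqP; apply: contraNT eN => wx.
by apply/bigcupP; exists w; rewrite // !inE wx.
Qed.

Lemma Pul_LP u x e : u \in U -> e \in PU u x -> e \in LP u /\ (x \in Fu u -> e \in LP x).
Proof.
move=> uU eP; have eu : e \in LP u by move: eP; rewrite PulE => /andP [].
split => // xF; have [w wF ew] := Fu_cov uU eu.
by rewrite -(Pul_excl eP wF ew).
Qed.

Lemma precE u x y : prec u x y = [forall c1 in PU u x, forall c2 in PU u y, sanc c1 c2].
Proof. by []. Qed.

Lemma prec_sanc u x y e f : prec u x y -> e \in PU u x -> f \in PU u y -> sanc e f.
Proof.
rewrite precE => /forallP H ex fy; have := H e; rewrite ex => /forallP /(_ f).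
by rewrite fy.
Qed.

Lemma precI u x y : (forall e f, e \in PU u x -> f \in PU u y -> sanc e f) -> prec u x y.
Proof.
move=> H; rewrite precE; apply/forallP => e; apply/implyP => ex.
by apply/forallP => f; apply/implyP => fy; apply: H.
Qed.

Lemma prec_irr u x : u \in U -> x \in Fu u -> ~~ prec u x x.
Proof.
move=> uU xF; apply/negP => H; have [e ex] := Pul_ne uU xF.
by have := prec_sanc H ex ex; rewrite /sanc eqxx.
Qed.

Lemma line_cmp u e f : u \in U -> e \in LP u -> f \in LP u -> anc e f || anc f e.
Proof.
move=> uU; have [b Hb] := uline (HU uU); rewrite !Hb => /andP [_ eb] /andP [_ fb].
exact: anc_total eb fb.
Qed.

Lemma prec_of u x y e0 f0 : u \in U -> x \in Fu u -> y \in Fu u -> x != y ->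
  e0 \in PU u x -> f0 \in PU u y -> sanc e0 f0 -> prec u x y.
Proof.
move=> uU xF yF xy e0x f0y ef; apply: precI => e f ex fy.
have [e0u /(_ xF) e0l] := Pul_LP uU e0x.
have [f0u /(_ yF) f0l] := Pul_LP uU f0y.
have [eu /(_ xF) el] := Pul_LP uU ex.
have [fu /(_ yF) fl] := Pul_LP uU fy.
have ef_ne : e != f by apply/eqP => E; subst f; move: xy; rewrite (Pul_excl fy xF el) eqxx.
rewrite /sanc ef_ne /=.
case/orP: (line_cmp uU eu fu) => // fe.
case/orP: (line_cmp uU f0u eu) => H.
  have := Pul_excl f0y xF (econtig (Fu2 uU xF) e0l el (sancW ef) H).
  by move=> E; move: xy; rewrite E eqxx.
have := Pul_excl ex yF (econtig (Fu2 uU yF) fl f0l fe H).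
by move=> E; move: xy; rewrite E eqxx.
Qed.

Lemma prec_total u x y : u \in U -> x \in Fu u -> y \in Fu u -> x != y ->
  prec u x y || prec u y x.
Proof.
move=> uU xF yF xy; have [e ex] := Pul_ne uU xF; have [f fy] := Pul_ne uU yF.
have [eu /(_ xF) el] := Pul_LP uU ex; have [fu /(_ yF) fl] := Pul_LP uU fy.
have ef : e != f by apply/eqP => E; subst f; move: xy; rewrite (Pul_excl fy xF el) eqxx.
case/orP: (line_cmp uU eu fu) => H.
  by rewrite (prec_of uU xF yF xy ex fy) // /sanc ef.
by rewrite (prec_of uU yF xF _ fy ex) ?orbT // 1?eq_sym // /sanc eq_sym ef.
Qed.

Lemma prec_trans u x y z : u \in U -> y \in Fu u -> prec u x y -> prec u y z -> prec u x z.
Proof.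
move=> uU yF H1 H2; have [f fy] := Pul_ne uU yF.
apply: precI => e g ex gz.
exact: sanc_anc_trans (prec_sanc H1 ex fy) (sancW (prec_sanc H2 fy gz)).
Qed.

Lemma AO u x y : u \in U -> x \in Fu u -> y \in Fu u -> prec u x y -> ~~ anc (apx y) (apx x).
Proof.
move=> uU xF yF H; apply/negP => Ha.
have [e ex] := Pul_ne uU xF; have [f fy] := Pul_ne uU yF.
have [_ /(_ xF) el] := Pul_LP uU ex; have [_ /(_ yF) fl] := Pul_LP uU fy.
have ye : sanc (apx y) e := anc_sanc_trans Ha (apex_sanc (Fu2 uU xF) el).
have := vcontig (Fu2 uU yF) (apex_in (Fu2 uU yF)) ye (sancW (prec_sanc H ex fy)) fl.
move=> ey; have E := Pul_excl ex yF ey; subst y.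
by move: (prec_irr uU xF); rewrite H.
Qed.

Lemma AuP u x y : (x, y) \in AU u -> [/\ x \in Fu u, y \in Fu u, prec u x y &
  forall z, z \in Fu u -> ~~ (prec u x z && prec u z y)].
Proof.
rewrite /Au inE => /and4P [H1 H2 H3 /forallP H4]; split => // z zF.
by have := H4 z; rewrite zF.
Qed.

Lemma AL u x y : u \in U -> (x, y) \in AU u -> apx y \in LP x /\ apx y \in LP u.
Proof.
move=> uU /AuP [xF yF pxy cons].
have x2 := Fu2 uU xF; have y2 := Fu2 uU yF; have u2 := U2 uU.
have xy : x != y by apply/eqP => E; subst y; move: (prec_irr uU xF); rewrite pxy.
have [e ex] := Pul_ne uU xF; have [f fy] := Pul_ne uU yF.
have [eu /(_ xF) el] := Pul_LP uU ex; have [fu /(_ yF) fl] := Pul_LP uU fy.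
have ef := prec_sanc pxy ex fy.
have qf := apex_sanc y2 fl.
have eq : anc e (apx y).
  case: (anc_cases (sancW ef) (sancW qf)) => [->|//|H]; first exact: anc_refl.
  exact: sancW.
  have := Pul_excl ex yF (vcontig y2 (apex_in y2) H (sancW ef) fl).
  by move=> E; move: xy; rewrite E eqxx.
have qu : apx y \in LP u := econtig u2 eu fu eq (sancW qf).
split => //.
have [z zF qz] := Fu_cov uU qu.
have [E|zx] := eqVneq z x; first by rewrite -E.
have [E|zy] := eqVneq z y; first by subst z; move: qz; rewrite (negbTE (apex_notin y2)).
have z2 := Fu2 uU zF.
case/orP: (prec_total uU zF xF zx) => H.
  have [g gz] := Pul_ne uU zF; have [_ /(_ zF) gl] := Pul_LP uU gz.
  have := Pul_excl ex zF (econtig z2 gl qz (sancW (prec_sanc H gz ex)) eq).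
  by move=> E; move: zx; rewrite E eqxx.
have nzy : ~~ prec u z y by move: (cons z zF); rewrite H.
have pyz : prec u y z by move: (prec_total uU zF yF zy); rewrite (negbTE nzy).
have [h hz] := Pul_ne uU zF; have [_ /(_ zF) hl] := Pul_LP uU hz.
have := Pul_excl fy zF (econtig z2 qz hl (sancW qf) (sancW (prec_sanc pyz fy hz))).
by move=> E; move: zy; rewrite E eqxx.
Qed.

Lemma AL_sanc u x y : u \in U -> (x, y) \in AU u -> sanc (apx x) (apx y).
Proof.
move=> uU H; have [xF _ _ _] := AuP H; have [H1 _] := AL uU H.
by have := apex_sanc (Fu2 uU xF) H1.
Qed.

Lemma OD u x y y' : u \in U -> (x, y) \in AU u -> (x, y') \in AU u -> y = y'.
Proof.
move=> uU H1 H2; have [xF yF p1 c1] := AuP H1; have [_ y'F p2 c2] := AuP H2.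
apply/eqP; apply: contraT => yy.
case/orP: (prec_total uU yF y'F yy) => H.
  by move: (c2 y yF); rewrite p1 H.
by move: (c1 y' y'F); rewrite p2 H.
Qed.

Lemma ID u u' x x' y : u \in U -> u' \in U -> (x, y) \in AU u -> (x', y) \in AU u' -> x = x'.
Proof.
move=> uU u'U H1 H2.
have [_ q1] := AL uU H1; have [_ q2] := AL u'U H2.
have E := same_u uU u'U q1 q2; subst u'.
have [xF yF p1 c1] := AuP H1; have [x'F _ p2 c2] := AuP H2.
apply/eqP; apply: contraT => xx.
case/orP: (prec_total uU xF x'F xx) => H.
  by move: (c1 x' x'F); rewrite H p2.
by move: (c2 x xF); rewrite H p1.
Qed.

Lemma BvE y w : (w \in Bv r par F y) = (w \in F) && anc y (apx w).
Proof. by rewrite /Bv inE. Qed.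

Lemma coveredI (S : {set {set V}}) (X : {set V}) : (forall e, e \in X -> exists2 w, w \in S & e \in LP w) ->
  covered_by r par S X.
Proof.
move=> H; apply/subsetP => e eX; have [w wS ew] := H e eX.
by apply/bigcupP; exists w.
Qed.

Lemma vuP u : u \in U -> anc (vu r par F u) (utop r par u) /\
  forall y, anc y (utop r par u) -> covered_by r par (Bv r par F y) (LP u) ->
    depth par y <= depth par (vu r par F u).
Proof.
move=> uU; rewrite /vu; case: pickP => [x /and3P [H1 H2 /forallP H3]|H] /=.
  split => // y Hy Hc; have := H3 y; rewrite Hy Hc; exact.
pose Pc y := anc y (utop r par u) && covered_by r par (Bv r par F y) (LP u).
have Pr : Pc r.
  rewrite /Pc anc_r /=; apply: coveredI => e eu.
  have : e \in tree_edges r.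
    rewrite inE; have [b Hb] := uline (HU uU); move: eu; rewrite Hb.
    by move=> /andP [/sanc_r_neq].
  rewrite -Hcov => /bigcupP [w wF ew]; exists w => //.
  by rewrite BvE wF anc_r.
case: (arg_maxnP (depth par) Pr) => x /andP [H1 H2] H3.
move: (H x); rewrite H1 H2 /=; move/negP; case.
apply/forallP => y; apply/implyP => /andP [Hy Hc]; apply: H3.
by rewrite /Pc Hy Hc.
Qed.

Lemma Fu_B u x : u \in U -> x \in Fu u -> anc (vu r par F u) (apx x).
Proof.
move=> uU xF; have [H _ _] := Hmin uU.
by move: (subsetP H x xF); rewrite BvE => /andP [].
Qed.

Lemma core x y y' u u' z :
  u \in U -> u' \in U -> u != u' -> (x, y) \in AU u -> (x, y') \in AU u' ->
  sanc (apx y) (apx y') -> z \in F -> anc (apx y) (apx z) -> ~~ anc (apx y') (apx z) ->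
  (z = y \/ exists p, exists2 u'', u'' \in U & (p, z) \in AU u'') ->
  apx y' \notin LP z.
Proof.
move=> uU u'U uu H1 H2 qq' zF qz nq'z Hz; apply/negP => q'z.
have [xF yF _ _] := AuP H1; have [xF' y'F p2 c2] := AuP H2.
have z2 := HF2 zF; have y'2 := Fu2 u'U y'F.
have [qx qu] := AL uU H1; have [q'x q'u] := AL u'U H2.
have [b' Hb'] := uline (HU u'U).
move: (q'u); rewrite Hb' => /andP [t'q' q'b'].
have zq'a : anc (apx z) (apx y') := apex_anc z2 (lpath_V q'z).1.
have zq' : sanc (apx z) (apx y').
  rewrite /sanc zq'a andbT; apply/eqP => E; move: nq'z; rewrite E anc_refl.
  by [].
have ax_q : sanc (apx x) (apx y) := AL_sanc uU H1.
case Hzt: (anc (apx z) (utop r par u')); last first.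
  have t'z : sanc (utop r par u') (apx z).
    have := anc_total (sancW t'q') zq'a; rewrite Hzt orbF => H.
    by rewrite /sanc H andbT; apply/eqP => E; move: Hzt; rewrite -E anc_refl.
  have zu' : apx z \in LP u' by rewrite Hb' t'z (anc_trans zq'a q'b').
  case: Hz => [E|[p [u'' u''U Hp]]].
    subst z; by move/eqP: uu; apply; apply: (same_u uU u'U qu zu').
  have [_ zu''] := AL u''U Hp.
  have E := same_u u''U u'U zu'' zu'; subst u''.
  have [_ zF' _ _] := AuP Hp.
  have zy' : z != y' by apply/eqP => E; subst z; move: zq'; rewrite /sanc eqxx.
  case/orP: (prec_total u'U zF' y'F zy') => H; last first.
    by move: (AO u'U y'F zF' H); rewrite zq'a.
  have zx : z != x.
    by apply/eqP => E; subst z; move: (sanc_not ax_q); rewrite qz.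
  case/orP: (prec_total u'U zF' xF' zx) => H'.
    by move: (AO u'U zF' xF' H'); rewrite (anc_trans (sancW ax_q) qz).
  by move: (c2 z zF'); rewrite H' H.
have cov : covered_by r par (Bv r par F (apx y)) (LP u').
  apply: coveredI => e eu'; move: (eu'); rewrite Hb' => /andP [t'e eb'].
  case eq': (anc e (apx y')).
    exists z; first by rewrite BvE zF qz.
    by have := vcontig z2 (apex_in z2) (anc_sanc_trans Hzt t'e) eq' q'z.
  have q'e : sanc (apx y') e.
    have := anc_total eb' q'b'; rewrite eq' /= => H.
    by rewrite /sanc H andbT; apply/eqP => E; move: eq'; rewrite E anc_refl.
  have [w wF' ew] := Fu_cov u'U eu'.
  have wF : w \in F := subsetP (Fu_sub u'U) w wF'.
  have w2 := HF2 wF.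
  case aw: (anc (apx y') (apx w)).
    by exists w => //; rewrite BvE wF (anc_trans (sancW qq') aw).
  have we : anc (apx w) e := sancW (apex_sanc w2 ew).
  have wq' : sanc (apx w) (apx y').
    have := anc_total we (sancW q'e); rewrite aw orbF => H.
    by rewrite /sanc H andbT; apply/eqP => E; move: aw; rewrite E anc_refl.
  have [f' f'y'] := Pul_ne u'U y'F.
  have [f'u /(_ y'F) f'l] := Pul_LP u'U f'y'.
  case/orP: (line_cmp u'U eu' f'u) => [ef'|f'e].
    exists y'; first by rewrite BvE (subsetP (Fu_sub u'U) y' y'F) (sancW qq').
    by have := vcontig y'2 (apex_in y'2) q'e ef' f'l.
  have wf' : sanc (apx w) f' := sanc_anc_trans wq' (sancW (apex_sanc y'2 f'l)).
  have := Pul_excl f'y' wF' (vcontig w2 (apex_in w2) wf' f'e ew).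
  by move=> E; subst w; move: wq'; rewrite /sanc eqxx.
have qt' : anc (apx y) (utop r par u').
  case: (anc_cases (sancW qq') (sancW t'q')) => [->|/sancW //|tq].
    exact: anc_refl.
  have qu' : apx y \in LP u' by rewrite Hb' tq (anc_trans (sancW qq') q'b').
  by exfalso; move/eqP: uu; apply; apply: (same_u uU u'U qu qu').
have [vt Hv] := vuP u'U.
have Hd := Hv _ qt' cov.
have qv : anc (apx y) (vu r par F u').
  case: (anc_cases qt' vt) => [E|/sancW //|H]; first by rewrite E; exact: anc_refl.
  by exfalso; move: (leq_ltn_trans Hd (depth_sanc H)); rewrite ltnn.
move: (sanc_not ax_q); rewrite (anc_trans qv (Fu_B u'U xF')).
by [].
Qed.

Definition arel : rel {set V} := fun x y => (x, y) \in darcs r par Fu U.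

Lemma arelP x y : reflect (exists2 u, u \in U & (x, y) \in AU u) (arel x y).
Proof.
rewrite /arel /darcs inE; apply: (iffP existsP) => [[u /andP [uU H]]|[u uU H]].
  by exists u.
by exists u; rewrite uU.
Qed.

Lemma arel_F x y : arel x y -> x \in F /\ y \in F.
Proof.
case/arelP => u uU /AuP [xF yF _ _].
by split; apply: (subsetP (Fu_sub uU)).
Qed.

Lemma arel_sanc x y : arel x y -> sanc (apx x) (apx y).
Proof. by case/arelP => u uU H; apply: AL_sanc H. Qed.

Lemma arel_V x y : arel x y -> apx y \in LV x.
Proof. by case/arelP => u uU H; have [H1 _] := AL uU H; have [] := lpath_V H1. Qed.

Lemma conn_anc x y : connect arel x y -> anc (apx x) (apx y).
Proof.
case/connectP => p; elim: p x => [|z p IH] x /=; first by move=> _ ->; apply: anc_refl.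
move=> /andP [xz pz] Ey; apply: anc_trans (sancW (arel_sanc xz)) _.
exact: IH pz Ey.
Qed.

Lemma arel_in x x' y : arel x y -> arel x' y -> x = x'.
Proof. by case/arelP => u uU H1 /arelP [u' u'U H2]; apply: ID H1 H2. Qed.



Lemma sib x y y' u u' z v : u \in U -> u' \in U -> u != u' ->
  (x, y) \in AU u -> (x, y') \in AU u' -> sanc (apx y) (apx y') ->
  connect arel y z -> v \in LV z -> ~~ anc (apx y') v.
Proof.
move=> uU u'U uu H1 H2 qq' Hc.
pose Inv z := [/\ z \in F, anc (apx y) (apx z) &
  forall v, v \in LV z -> ~~ anc (apx y') v].
have [_ yF _ _] := AuP H1.
have yF' : y \in F := subsetP (Fu_sub uU) y yF.
have I0 : Inv y.
  split => //; first exact: anc_refl.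
  move=> w wV; apply/negP => Hw.
  have y2 := HF2 yF'.
  have Hin := cross y2 wV (apex_in y2) Hw (sanc_not qq').
  have := core uU u'U uu H1 H2 qq' yF' (anc_refl _) (sanc_not qq') (or_introl erefl).
  by rewrite Hin.
have Istep : forall z z', Inv z -> arel z z' -> Inv z'.
  move=> z1 z2 [z1F qz1 av] Ha; have [_ z2F] := arel_F Ha.
  have qz2 := anc_trans qz1 (sancW (arel_sanc Ha)).
  split => // w wV; apply/negP => Hw.
  have a2 := HF2 z2F.
  have Hin := cross a2 wV (apex_in a2) Hw (av _ (arel_V Ha)).
  have Hex : z2 = y \/ exists p, exists2 u'', u'' \in U & (p, z2) \in AU u''.
    by right; case/arelP: Ha => u0 u0U H0; exists z1; exists u0.
  have := core uU u'U uu H1 H2 qq' z2F qz2 (av _ (arel_V Ha)) Hex.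
  by rewrite Hin.
have Gen : forall p z0, Inv z0 -> path arel z0 p -> Inv (last z0 p).
  elim=> [|a p IH] z0 I1 //= /andP [ya pa].
  exact: (IH a (Istep _ _ I1 ya) pa).
have : Inv z.
  by case/connectP: Hc => p Hp ->; apply: Gen.
by case => _ _; apply.
Qed.

Lemma inj_core u x1 y1 x2 y2 a : u \in U -> (x1, y1) \in AU u -> (x2, y2) \in AU u ->
  a \in LV x1 -> anc (apx y2) a -> prec u x1 x2 -> False.
Proof.
move=> uU H1 H2 aV qa p12.
have [x1F y1F p1 c1] := AuP H1; have [x2F y2F p2 c2] := AuP H2.
have py1y2 : prec u y1 y2.
  have [E|ne] := eqVneq y1 x2; first by rewrite E.
  case/orP: (prec_total uU y1F x2F ne) => H; first exact: prec_trans x2F H p2.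
  by move: (c1 x2 x2F); rewrite p12 H.
have px1y2 : prec u x1 y2 := prec_trans uU y1F p1 py1y2.
have x12 := Fu2 uU x1F; have y22 := Fu2 uU y2F.
have nq := AO uU x1F y2F px1y2.
have qx1 : apx y2 \in LP x1 := cross x12 aV (apex_in x12) qa nq.
have [e ey1] := Pul_ne uU y1F; have [g gx1] := Pul_ne uU x1F; have [f fy2] := Pul_ne uU y2F.
have [_ /(_ x1F) gl] := Pul_LP uU gx1; have [_ /(_ y2F) fl] := Pul_LP uU fy2.
have sge := prec_sanc p1 gx1 ey1; have sef := prec_sanc py1y2 ey1 fy2.
have qf := apex_sanc y22 fl.
have bad1 : e \in LP x1 -> False.
  move=> el; have E := Pul_excl ey1 x1F el; subst x1.
  by move: (prec_irr uU y1F); rewrite p1.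
case/orP: (anc_total (sancW sef) (sancW qf)) => H.
  by apply: bad1; apply: (econtig x12 gl qx1 (sancW sge) H).
have [E|ne] := eqVneq (apx y2) e; first by apply: bad1; rewrite -E.
have qe : sanc (apx y2) e by rewrite /sanc ne H.
have ey2 : e \in LP y2 by have := vcontig y22 (apex_in y22) qe (sancW sef) fl.
have E := Pul_excl ey1 y2F ey2; subst y2.
by move: (prec_irr uU y1F); rewrite py1y2.
Qed.

Lemma main (x0 l rho : {set V}) (s : seq {set V}) :
  x0 \in F ->
  let C := wcomp r par Fu U x0 in
  let A := [set a in darcs r par Fu U | (a.1 \in C) && (a.2 \in C)] in
  l \in C ->
  rho \in C -> (forall y, (y, rho) \notin A) ->
  path (fun x y => (x, y) \in A) rho s -> last rho s = l ->
  let H := [set a | a \in zip (rho :: s) s] in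
  #|[set lb in C | (lb != l) && (apex r par l \in lverts r par lb)]|
  <= #|[set u in U | [exists a in H, a \in Au r par Fu u]]|.
Proof.
move=> x0F C A lC rhoC noin Hp Hl.
pose H := [set a | a \in zip (rho :: s) s].
rewrite /= -/H.
pose wr := wrel r par Fu U.
have wr_sym : connect_sym wr.
  by apply: sym_connect_sym => a b; rewrite /wr /wrel orbC.
have CE z : (z \in C) = connect wr x0 z by rewrite /C /wcomp inE.
have wrE a b : wr a b = arel a b || arel b a by [].
have CF z : z \in C -> z \in F.
  rewrite CE => Hz; have [E|ne] := eqVneq z x0; first by rewrite E.
  have [p _] := connect_last Hz ne; rewrite wrE => /orP [] /arel_F [].
    by [].
  by [].
have Ap : path arel rho s.
  by apply: sub_path Hp => a b; rewrite inE => /andP [].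
have walk_arel a b : (a, b) \in zip (rho :: s) s -> arel a b.
  by move=> Hz; apply: walk_zip Ap Hz.
have inW_conn z : z \in rho :: s -> connect arel z l.
  by move=> Hz; rewrite -Hl; apply: walk_conn Ap Hz.
pose Q z := z \in rho :: s \/ exists x, exists c, [/\ x \in rho :: s, arel x c,
  (x, c) \notin zip (rho :: s) s & connect arel c z].
have Qstep z z' : Q z -> wr z z' -> Q z'.
  move=> Qz; rewrite wrE => /orP [Hf|Hb].
    case: Qz => [zW|[x [c [xW xc xcH cz]]]].
      case Hz: ((z, z') \in zip (rho :: s) s).
        by left; have [_ H2] := zip_mem Hz; rewrite in_cons H2 orbT.
      by right; exists z; exists z'; rewrite Hz; split => //; apply: connect0.
    right; exists x; exists c; split => //.
    by apply: (connect_trans cz); apply: connect1.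
  case: Qz => [zW|[x [c [xW xc xcH cz]]]].
    have [E|zr] := eqVneq z rho.
      subst z; have z'C : z' \in C.
        rewrite CE; apply: (connect_trans (_ : connect wr x0 rho)); first by rewrite -CE.
        by apply: connect1; rewrite wrE Hb orbT.
      by have := noin z'; rewrite inE /= z'C rhoC andbT; rewrite /arel in Hb; rewrite Hb.
    have zs : z \in s by move: zW; rewrite in_cons (negbTE zr).
    have [w Hw] := walk_prev rho zs.
    have E := arel_in Hb (walk_arel _ _ Hw); subst z'.
    by left; have [H1 _] := zip_mem Hw.
  have [E|ne] := eqVneq z c.
    subst z; have E := arel_in Hb xc; subst z'.
    by left.
  have [p cp pz] := connect_last cz ne.
  have E := arel_in Hb pz; subst z'.
  by right; exists x; exists c; split.
have Qall z : connect wr l z -> Q z.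
  have Gen : forall p z0, Q z0 -> path wr z0 p -> Q (last z0 p).
    elim=> [|a p IH] z0 Qz0 //= /andP [za pa].
    exact: (IH a (Qstep _ _ Qz0 za) pa).
  have Ql : Q l by left; rewrite -Hl mem_last.
  by case/connectP => p Hp0 ->; apply: Gen.
pose S := [set lb in C | (lb != l) && (apex r par l \in lverts r par lb)].
have l2 : #|l| = 2 := HF2 (CF l lC).
have SW lb : lb \in S -> lb \in rho :: s.
  rewrite inE => /andP [lbC /andP [lbl alb]].
  have lb2 : #|lb| = 2 := HF2 (CF lb lbC).
  have Hc : connect wr l lb.
    apply: connect_trans _ (_ : connect wr x0 lb); last by rewrite -CE.
    by rewrite wr_sym -CE.
  case: (Qall lb Hc) => [//|[x [c [xW xc xcH cz]]]].
  exfalso.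
  have aclb : anc (apx c) (apex r par l) := anc_trans (conn_anc cz) (apex_anc lb2 alb).
  have [E|xl] := eqVneq x l.
    subst x; move: (sanc_not (arel_sanc xc)); rewrite aclb.
    by [].
  have xl' : x != last rho s by rewrite Hl.
  have [y Hy] := walk_next xW xl'.
  have xy := walk_arel _ _ Hy.
  have yc : y != c by apply/eqP => E; subst y; move: xcH; rewrite Hy.
  have [_ ys] := zip_mem Hy.
  have yW : y \in rho :: s by rewrite in_cons ys orbT.
  have ayl : anc (apx y) (apex r par l) := conn_anc (inW_conn y yW).
  case/arelP: xy => u uU Hxy; case/arelP: xc => u' u'U Hxc.
  have uu : u != u' by apply/eqP => E; subst u'; move: yc; rewrite (OD uU Hxy Hxc) eqxx.
  have [_ qu] := AL uU Hxy; have [_ q'u] := AL u'U Hxc.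
  case: (anc_cases ayl aclb) => [E|qq'|q'q].
    by move/eqP: uu; apply; apply: (same_u uU u'U qu); rewrite E.
    have := sib uU u'U uu Hxy Hxc qq' (inW_conn y yW) (apex_in l2).
    by rewrite aclb.
  have u'u : u' != u by rewrite eq_sym.
  have := sib u'U uU u'u Hxc Hxy q'q cz alb.
  by rewrite ayl.
pose R := [set u in U | [exists a in H, a \in Au r par Fu u]].
pose g lb := odflt lb [pick u in U | [exists a in H, (a.1 == lb) && (a \in Au r par Fu u)]].
have gP lb : lb \in S -> exists y, [/\ g lb \in U, (lb, y) \in H & (lb, y) \in AU (g lb)].
  move=> lbS; rewrite /g; case: pickP => [u /andP [uU /existsP [[a1 a2] /andP [aH /andP [/eqP /= E aA]]]]|none].
    by subst a1; exists a2; split.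
  exfalso; have lbW := SW lb lbS.
  have lbl : lb != l by move: lbS; rewrite inE => /and3P [].
  have lbl' : lb != last rho s by rewrite Hl.
  have [y Hy] := walk_next lbW lbl'.
  case/arelP: (walk_arel _ _ Hy) => u uU Hu.
  move: (none u); rewrite uU /= => /negbT/negP; apply; apply/existsP; exists (lb, y).
  by rewrite inE Hy eqxx Hu.
have gR : [set g lb | lb in S] \subset R.
  apply/subsetP => u /imsetP [lb lbS ->]; have [y [gU yH yA]] := gP lb lbS.
  by rewrite inE gU; apply/existsP; exists (lb, y); rewrite yH.
have ginj : {in S &, injective g}.
  move=> x1 x2 x1S x2S gE; apply/eqP; apply: contraT => x12.
  have [y1 [uU y1H A1]] := gP x1 x1S; have [y2 [_ y2H A2]] := gP x2 x2S.
  rewrite -gE in A2; set u := g x1 in uU A1 A2.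
  have ayW z w : (z, w) \in H -> anc (apx w) (apex r par l).
    by rewrite inE => Hz; have [_ ws] := zip_mem Hz; apply: conn_anc; apply: inW_conn; rewrite in_cons ws orbT.
  have aV z : z \in S -> apex r par l \in LV z by rewrite inE => /and3P [].
  have [x1F _ _ _] := AuP A1; have [x2F _ _ _] := AuP A2.
  case/orP: (prec_total uU x1F x2F x12) => Hp12.
    by case: (inj_core uU A1 A2 (aV _ x1S) (ayW _ _ y2H) Hp12).
  by case: (inj_core uU A2 A1 (aV _ x2S) (ayW _ _ y1H) Hp12).
rewrite -(card_in_imset ginj).
exact: subset_leq_card gR.
Qed.

End Tree.




Theorem lemma13 (V : finType) (r : V) (par : V -> V)
  (L : {set {set V}}) (w : {set V} -> rat) (F : {set {set V}})
  (Fu : {set V} -> {set {set V}}) (U : {set {set V}})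
  (x0 : {set V}) (l rho : {set V}) (s : seq {set V}) :
  is_rooted_tree r par ->
  (forall e, e \in L -> #|e| = 2) ->
  (forall e, e \in L -> (0 < w e)%R) ->
  F \subset L ->
  \bigcup_(e in F) lpath r par e = tree_edges r ->
  U \subset [set u in L | is_uplink par u] ->
  (forall u, u \in U -> minimal_cover r par F u (Fu u)) ->
  (forall u1 u2, u1 \in U -> u2 \in U -> u1 != u2 ->
     [disjoint lpath r par u1 & lpath r par u2]) ->
  x0 \in F ->
  let C := wcomp r par Fu U x0 in
  let A := [set a in darcs r par Fu U | (a.1 \in C) && (a.2 \in C)] in
  l \in C ->
  rho \in C -> (forall y, (y, rho) \notin A) ->
  path (fun x y => (x, y) \in A) rho s -> last rho s = l ->
  let H := [set a | a \in zip (rho :: s) s] in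
  #|[set lb in C | (lb != l) && (apex r par l \in lverts r par lb)]|
  <= #|[set u in U | [exists a in H, a \in Au r par Fu u]]|.
Proof.
move=> Htree HL _ FL Hcov UL Hmin Hdisj x0F.
have HF2 : forall e, e \in F -> #|e| = 2 by move=> e eF; apply: HL; apply: (subsetP FL).
have HU : forall u, u \in U -> is_uplink par u.
  by move=> u uU; move: (subsetP UL u uU); rewrite inE => /andP [].
exact: (main Htree HF2 Hcov HU Hmin Hdisj x0F).
Qed.
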